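(* Let $\mathcal{C}\subseteq\mathbb{F}^n$ be an $\mathbb{F}$-linear code of dimension $k$ and let $M_{\mathcal{C}}=(\mathbf{K}^{\mathbf{n}},\rho_{\mathcal{C}})$ be the associated sum-matroid. Then for $i=1,\dots,k$, $d^S_i(M_{\mathcal{C}})=d_{SR,i}(\mathcal{C})$.
   Context: Setting: $\ell,n_1,\dots,n_\ell$ positive integers, $K_1,\dots,K_\ell$ finite fields with a common finite extension $\mathbb{F}$, $m_i=[\mathbb{F}:K_i]$, $n=\sum n_i$. $\mathcal{P}(\mathbf{K}^{\mathbf{n}})=\mathcal{P}(K_1^{n_1})\times\cdots\times\mathcal{P}(K_\ell^{n_\ell})$, $\mathcal{P}(K_i^{n_i})$ the lattice of $K_i$-subspaces of $K_i^{n_i}$, with componentwise inclusion; $\mathrm{Rk}(\mathcal{L})=\sum_i\dim_{K_i}\mathcal{L}_i$; $\mathbf{K}^{\mathbf{n}}=(K_1^{n_1},\dots,K_\ell^{n_\ell})$. For $\mathbf{c}=(\mathbf{c}^{(1)},\dots,\mathbf{c}^{(\ell)})\in\mathbb{F}^n$, $\mathbf{c}^{(i)}\in\mathbb{F}^{n_i}$, let $\Gamma_i(\mathbf{c}^{(i)})$ be the $m_i\times n_i$ matrix over $K_i$ whose columns are the coordinate vectors of the entries of $\mathbf{c}^{(i)}$ w.r.t. a fixed basis of $\mathbb{F}/K_i$; $\mathrm{supp}(\mathbf{c})=(E_1,\dots,E_\ell)$ with $E_i$ the $K_i$-row space of $\Gamma_i(\mathbf{c}^{(i)})$. For $\mathcal{L}\in\mathcal{P}(\mathbf{K}^{\mathbf{n}})$,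 $\mathcal{V}_{\mathcal{L}}=\{\mathbf{c}\in\mathbb{F}^n:\mathrm{supp}(\mathbf{c})\subseteq\mathcal{L}\}$ (an $\mathbb{F}$-subspace). The $i$-th generalized sum-rank weight is $d_{SR,i}(\mathcal{C})=\min\{\mathrm{Rk}(\mathcal{L}):\mathcal{L}\in\mathcal{P}(\mathbf{K}^{\mathbf{n}}),\ \dim_{\mathbb{F}}(\mathcal{C}\cap\mathcal{V}_{\mathcal{L}})\ge i\}$. $\mathcal{C}^\perp$ is the dual of $\mathcal{C}$ in $\mathbb{F}^n$. For $\mathcal{L}=(\mathcal{L}_1,\dots,\mathcal{L}_\ell)$ with $N_i=\dim_{K_i}\mathcal{L}_i$, $N=\sum N_i$, let $\mathbf{A}_i$ be an $N_i\times n_i$ generator matrix of $\mathcal{L}_i$ over $K_i$, $\mathbf{A}=\mathrm{diag}(\mathbf{A}_1,\dots,\mathbf{A}_\ell)$, $\Pi_{\mathcal{L}}(\mathbf{x})=\mathbf{x}\mathbf{A}^T\in\mathbb{F}^N$, and $\rho_{\mathcal{C}}(\mathcal{L})=\dim_{\mathbb{F}}\Pi_{\mathcal{L}}(\mathcal{C}^\perp)$. For a sum-matroid $M$ with rank function $\rho$, its nullity is $\eta(\mathcal{L})=\mathrm{Rk}(\mathcal{L})-\rho(\mathcal{L})$ and its $i$-th generalized weight is $d^S_i(M)=\min\{\mathrm{Rk}(\mathcal{L}):\mathcal{L}\in\mathcal{P}(\mathbf{K}^{\mathbf{n}}),\ \eta(\mathcal{L})=i\}$ for $i=1,\dots,\eta(\mathbf{K}^{\mathbf{n}})$.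 *)

(* Defs.v *)
From HB Require Import structures.
From mathcomp Require Import all_boot all_order all_algebra.
Unset Strict Implicit. Unset Printing Implicit Defensive.
Import GRing.Theory.
Local Open Scope ring_scope.

(* Setting: l blocks; block i has length n i and base field K i (a finite
   field), embedded in the common finite extension F by the field morphism
   emb i.  b i : 'I_(m i) -> F is the fixed K_i-basis of F (hypothesis
   [is_basis] in the theorem), so m i = [F : K_i].
   Vectors of F^n (n = sum n_i) are row vectors 'rV[F]_(\sum_i n i); the
   i-th block c^(i) is [submxrow c i].
   A K_i-subspace of K_i^{n_i} is represented (mxalgebra style) by a square
   matrix whose row space is that subspace. *)

Section SumRank.
Variables (F : finFieldType) (l : nat) (n : 'I_l -> nat) (K : 'I_l -> finFieldType)
  (emb : forall i, {rmorphism K i -> F}) (m : 'I_l -> nat)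
  (b : forall i, 'I_(m i) -> F).

Definition totlen := (\sum_(i < l) n i)%N.

Definition is_basis (i : 'I_l) : Prop :=
  forall x : F, exists! a : 'rV[K i]_(m i), x = \sum_(r < m i) emb i (a ord0 r) * b i r.

(* Gamma_i(v): the m_i x n_i matrix over K_i whose j-th column is the
   coordinate vector of v_j w.r.t. the basis b i. *)
Definition Gamma (i : 'I_l) (v : 'rV[F]_(n i)) : 'M[K i]_(m i, n i) :=
  odflt 0 [pick G : 'M[K i]_(m i, n i) |
            [forall j, v ord0 j == \sum_(r < m i) emb i (G r j) * b i r]].

(* elements of P(K^n): families of subspaces *)
Definition lat := forall i : 'I_l, 'M[K i]_(n i).

Definition Rk (L : lat) : nat := (\sum_(i < l) \rank (L i))%N.

(* supp(c) \subseteq L : for each i, the row space of Gamma_i(c^(i)) is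
   contained in L_i *)
Definition supp_sub (c : 'rV[F]_totlen) (L : lat) : bool :=
  [forall i, (Gamma i (@submxrow _ _ n 1 c i) <= L i)%MS].

(* V_L as an F-subspace of F^n (span of the set {c | supp(c) <= L}, which
   is already a subspace) *)
Definition VL (L : lat) : 'M[F]_totlen :=
  (\sum_(c : 'rV[F]_totlen | supp_sub c L) <<c>>)%MS.

Definition dual (C : 'M[F]_totlen) : 'M[F]_totlen := kermx C^T.

(* Pi_L(X) = X A^T with A = diag(A_1,...,A_l), A_i = row_base (L i) a
   generator matrix of L_i, applied to all rows of X *)
Definition PiL (L : lat) k (X : 'M[F]_(k, totlen)) :
  'M[F]_(k, \sum_(i < l) \rank (L i)) :=
  \mxrow_(i < l) (@submxrow _ _ n k X i *m (map_mx (emb i) (row_base (L i)))^T).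

Definition rhoC (C : 'M[F]_totlen) (L : lat) : nat := \rank (PiL L totlen (dual C)).

Definition is_dSR (C : 'M[F]_totlen) (t : nat) (d : nat) : Prop :=
  (exists L : lat, Rk L = d /\ (t <= \rank (C :&: VL L)%MS)%N) /\
  (forall L : lat, (t <= \rank (C :&: VL L)%MS)%N -> (d <= Rk L)%N).

Definition nullity (rho : lat -> nat) (L : lat) : nat := (Rk L - rho L)%N.

Definition is_dS (rho : lat -> nat) (t : nat) (d : nat) : Prop :=
  (exists L : lat, Rk L = d /\ nullity rho L = t) /\
  (forall L : lat, nullity rho L = t -> (d <= Rk L)%N).

End SumRank.

(* Main.v *)
Require Import Defs.
From HB Require Import structures.
From mathcomp Require Import all_boot all_order all_algebra.
From Stdlib Require Import Classical.
From mathcomp Require Import zify.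
Unset Strict Implicit. Unset Printing Implicit Defensive.
Import GRing.Theory.
Local Open Scope ring_scope.

Section Proof.
Variables (F : finFieldType) (l : nat) (n : 'I_l -> nat) (K : 'I_l -> finFieldType)
  (emb : forall i, {rmorphism K i -> F}) (m : 'I_l -> nat)
  (b : forall i, 'I_(m i) -> F).
Hypothesis hb : forall i, is_basis F l K emb m b i.

Lemma coord_ex i (v : 'rV[F]_(n i)) :
  exists G : 'M[K i]_(m i, n i), forall j, v ord0 j = \sum_(r < m i) emb i (G r j) * b i r.
Proof.
have /fin_all_exists [f Hf] : forall j : 'I_(n i), exists a : 'rV[K i]_(m i),
    v ord0 j = \sum_(r < m i) emb i (a ord0 r) * b i r.
  by move=> j; have [a [Ha _]] := hb i (v ord0 j); exists a.
by exists (\matrix_(r, j) f j ord0 r) => j; rewrite Hf; apply: eq_bigr => r _; rewrite mxE.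
Qed.

Lemma GammaP i (v : 'rV[F]_(n i)) :
  forall j, v ord0 j = \sum_(r < m i) emb i (Gamma F l n K emb m b i v r j) * b i r.
Proof.
rewrite /Gamma; case: pickP => [G /forallP HG|H] j /=; first exact/eqP/HG.
have [G HG] := coord_ex i v; have := H G; by move/negbT/forallPn => -[j1]; rewrite HG eqxx.
Qed.

Lemma Gamma_uniq i (v : 'rV[F]_(n i)) (G : 'M[K i]_(m i, n i)) :
  (forall j, v ord0 j = \sum_(r < m i) emb i (G r j) * b i r) ->
  Gamma F l n K emb m b i v = G.
Proof.
move=> HG; apply/matrixP => r j.
have [a [_ Hu]] := hb i (v ord0 j).
have E1 := Hu (\row_r0 G r0 j); have E2 := Hu (\row_r0 Gamma F l n K emb m b i v r0 j).
have e1 : \row_r0 G r0 j = a.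
  by apply/esym/E1; rewrite HG; apply: eq_bigr => r0 _; rewrite mxE.
have e2 : \row_r0 Gamma F l n K emb m b i v r0 j = a.
  by apply/esym/E2; rewrite GammaP; apply: eq_bigr => r0 _; rewrite mxE.
have e3 := etrans e2 (esym e1); by have := congr1 (fun M : 'rV[K i]_(m i) => M ord0 r) e3; rewrite !mxE.
Qed.

Lemma Gamma_sub i (v : 'rV[F]_(n i)) r (R : 'M[K i]_(r, n i)) :
  (Gamma F l n K emb m b i v <= R)%MS = (v <= map_mx (emb i) R)%MS.
Proof.
set G := Gamma F l n K emb m b i v.
apply/idP/idP.
- case/submxP => D eG.
  have -> : v = \sum_(s < m i) b i s *: row s (map_mx (emb i) G).
    apply/rowP => j; rewrite (GammaP i v j) summxE; apply: eq_bigr => s _.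
    by rewrite !mxE mulrC.
  apply: summx_sub => s _; apply: scalemx_sub.
  by rewrite eG map_mxM row_mul submxMl.
- case/submxP => u eu.
  have /fin_all_exists [f Hf] : forall s : 'I_r, exists a : 'rV[K i]_(m i),
      u ord0 s = \sum_(t < m i) emb i (a ord0 t) * b i t.
    by move=> s; have [a [Ha _]] := hb i (u ord0 s); exists a.
  pose A := \matrix_(t < m i, s < r) f s ord0 t.
  suff -> : G = A *m R by apply: submxMl.
  apply: Gamma_uniq => j.
  rewrite eu !mxE.
  under eq_bigr do rewrite Hf mulr_suml.
  rewrite exchange_big /=; apply: eq_bigr => t _.
  rewrite !mxE rmorph_sum mulr_suml; apply: eq_bigr => s _.
  by rewrite !mxE rmorphM /=; rewrite -!mulrA; congr (_ * _); rewrite mulrC.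
Qed.

Definition Bm (L : lat l n K) i : 'M[F]_(\rank (L i), n i) := map_mx (emb i) (row_base (L i)).

Definition Q (L : lat l n K) : 'M[F]_(\sum_(i < l) \rank (L i), totlen l n) :=
  \mxblock_(i, j) (if i == j then conform_mx 0 (Bm L i) else 0 : 'M_(\rank (L i), n j)).

Lemma mulQ (L : lat l n K) (y : 'rV[F]_(\sum_(i < l) \rank (L i))) :
  y *m Q L = \mxrow_j (submxrow y j *m Bm L j).
Proof.
rewrite -{1}(submxrowK y) /Q mul_mxrow_mxblock; apply/eq_mxrowP => j.
rewrite (bigD1 j) //= eqxx conform_mx_id big1 ?addr0 // => i /negbTE.
by rewrite eq_sym => ->; rewrite mulmx0.
Qed.

Lemma PiLE (L : lat l n K) k (X : 'M[F]_(k, totlen l n)) :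
  PiL F l n K emb L k X = X *m (Q L)^T.
Proof.
rewrite /Q tr_mxblock -{2}(submxrowK X) mul_mxrow_mxblock /PiL; apply/eq_mxrowP => j.
rewrite (bigD1 j) //= eqxx conform_mx_id big1 ?addr0 // => i /negbTE.
by rewrite eq_sym => ->; rewrite trmx0 mulmx0.
Qed.

Lemma Bm_free (L : lat l n K) i : row_free (Bm L i).
Proof. by rewrite /row_free /Bm mxrank_map; apply: row_base_free. Qed.

Lemma Q_free (L : lat l n K) : row_free (Q L).
Proof.
rewrite -kermx_eq0; apply/rowV0P => v; rewrite sub_kermx mulQ => /eqP H.
apply/mxrowP => j; rewrite submxrow0.
have := congr1 (fun M => submxrow M j) H; rewrite /= mxrowK submxrow0 => /eqP.
by rewrite mulmx_free_eq0 ?Bm_free // => /eqP.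
Qed.

Lemma rank_Q (L : lat l n K) : \rank (Q L) = Rk l n K L.
Proof. by have /eqP := Q_free L. Qed.

Lemma subQ (L : lat l n K) (c : 'rV[F]_(totlen l n)) :
  (c <= Q L)%MS = supp_sub F l n K emb m b c L.
Proof.
apply/idP/forallP.
- case/submxP => y -> j.
  rewrite mulQ mxrowK.
  apply: (submx_trans (_ : _ <= row_base (L j))%MS); last by rewrite eq_row_base.
  by rewrite Gamma_sub submxMl.
- move=> H.
  have Hj j : (@submxrow _ _ n 1 c j <= Bm L j)%MS.
    have := H j; rewrite -Gamma_sub => HH.
    by apply: submx_trans HH _; rewrite eq_row_base.
  pose y := \mxrow_j (@submxrow _ _ n 1 c j *m pinvmx (Bm L j)).
  suff -> : c = y *m Q L by apply: submxMl.
  rewrite mulQ; apply/mxrowP => j; rewrite mxrowK /y mxrowK mulmxKpV //.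
Qed.

Lemma VL_Q (L : lat l n K) : (VL F l n K emb m b L :=: Q L)%MS.
Proof.
apply/eqmxP/andP; split.
- apply/sumsmx_subP => c Hc; by rewrite genmxE subQ.
- apply/row_subP => r; apply: (sumsmx_sup (row r (Q L))).
    by rewrite -subQ row_sub.
  by rewrite genmxE.
Qed.

Lemma rank_VL (L : lat l n K) : \rank (VL F l n K emb m b L) = Rk l n K L.
Proof. by rewrite VL_Q rank_Q. Qed.

Lemma dual_dual (C : 'M[F]_(totlen l n)) : (kermx (dual F l n C)^T :=: C)%MS.
Proof.
apply: eqmx_sym; apply/eqmxP; have sC : (C <= kermx (dual F l n C)^T)%MS.
  by rewrite sub_kermx /dual -[C in C *m _]trmxK -trmx_mul mulmx_ker trmx0.
rewrite -(mxrank_leqif_eq sC) eqn_leq mxrankS //= mxrank_ker mxrank_tr /dual mxrank_ker.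
by rewrite mxrank_tr subKn ?rank_leq_col.
Qed.

Lemma nullityE (C : 'M[F]_(totlen l n)) (L : lat l n K) :
  nullity l n K (rhoC F l n K emb C) L = \rank (C :&: VL F l n K emb m b L)%MS.
Proof.
rewrite /nullity /rhoC PiLE -mxrank_tr trmx_mul trmxK -rank_Q.
rewrite -(mxrank_mul_ker (Q L) (dual F l n C)^T) addKn.
by rewrite (cap_eqmx (eqmx_refl _) (dual_dual C)) capmxC (cap_eqmx (eqmx_refl C) (VL_Q L)).
Qed.

Lemma VL_mono (L L' : lat l n K) : (forall i, (L' i <= L i)%MS) ->
  (VL F l n K emb m b L' <= VL F l n K emb m b L)%MS.
Proof.
move=> HL; apply/sumsmx_subP => c Hc; apply: (sumsmx_sup c) => //.
apply/forallP => i; apply: submx_trans (HL i); exact: (forallP Hc i).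
Qed.

Lemma shrink (C : 'M[F]_(totlen l n)) (L : lat l n K) : (0 < Rk l n K L)%N ->
  exists L' : lat l n K, (Rk l n K L').+1 = Rk l n K L /\
    (\rank (C :&: VL F l n K emb m b L)%MS <= (\rank (C :&: VL F l n K emb m b L')%MS).+1)%N.
Proof.
move=> HR.
have [i Hi] : exists i, (0 < \rank (L i))%N.
  case: (boolP [exists i, (0 < \rank (L i))%N]) => [/existsP[i Hi]|/existsPn H]; first by exists i.
  move: HR; rewrite /Rk big1 // => i _; have := H i; by rewrite lt0n negbK => /eqP.
pose L' : lat l n K := fun j => if j == i then
   <<(pid_mx (\rank (L j)).-1 : 'M_(\rank (L j))) *m row_base (L j)>>%MS else L j.
have rL'i : (\rank (L' i)).+1 = \rank (L i).
  rewrite /L' eqxx genmxE mxrankMfree ?row_base_free // rank_pid_mx ?leq_pred //.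
  by rewrite prednK.
have sL' j : (L' j <= L j)%MS.
  rewrite /L'; case: eqP => _ //; rewrite genmxE.
  by apply: submx_trans (submxMl _ _) _; rewrite eq_row_base.
have RL : (Rk l n K L').+1 = Rk l n K L.
  rewrite /Rk (bigD1 i) //= [in RHS](bigD1 i) //= -rL'i addSn; congr (_ + _)%N.+1.
  by apply: eq_bigr => j /negbTE Hj; rewrite /L' Hj.
exists L'; split => //.
set V := VL F l n K emb m b L; set V' := VL F l n K emb m b L'.
have sV : (V' <= V)%MS by apply: VL_mono.
have rV : (\rank V').+1 = \rank V by rewrite /V /V' !rank_VL.
have := mxrank_sum_cap (C :&: V)%MS V'.
have h1 : (\rank ((C :&: V) + V')%MS <= \rank V)%N.
  by apply: mxrankS; rewrite addsmx_sub capmxSr sV.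
have h2 : (\rank ((C :&: V) :&: V')%MS <= \rank (C :&: V')%MS)%N.
  by apply: mxrankS; apply: capmxS => //; apply: capmxSl.
lia.
Qed.

Local Notation f C L := (\rank (C :&: VL F l n K emb m b L)%MS).

Lemma ex_min (C : 'M[F]_(totlen l n)) t : (t <= \rank C)%N ->
  exists L0 : lat l n K, (t <= f C L0)%N /\
    forall L', (t <= f C L')%N -> (Rk l n K L0 <= Rk l n K L')%N.
Proof.
move=> HtC.
pose Lf : lat l n K := fun i => 1%:M.
have HLf : (t <= f C Lf)%N.
  suff sC : (C <= VL F l n K emb m b Lf)%MS by rewrite (capmx_idPl sC).
  apply/row_subP => r; apply: (sumsmx_sup (row r C)); last by rewrite genmxE.
  by apply/forallP => i; apply: submx1.
suff H : forall d (L : lat l n K), (Rk l n K L <= d)%N -> (t <= f C L)%N ->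
  exists L0 : lat l n K, (t <= f C L0)%N /\
    forall L', (t <= f C L')%N -> (Rk l n K L0 <= Rk l n K L')%N.
  exact: (H _ Lf (leqnn _) HLf).
elim=> [|d IH] L HL Ht.
  exists L; split => // L' _; move: HL; rewrite leqn0 => /eqP ->; done.
case: (classic (exists L' : lat l n K, (t <= f C L')%N /\ (Rk l n K L' < Rk l n K L)%N)).
  case=> L' [H1 H2]; apply: (IH L') => //; lia.
move=> Hno; exists L; split => // L' H'; rewrite leqNgt; apply/negP => H''.
by apply: Hno; exists L'.
Qed.

Lemma main_sec (C : 'M[F]_(totlen l n)) (k : nat) (hk : \rank C = k) :
  forall t : nat, (1 <= t <= k)%N ->
    exists d : nat,
      is_dS l n K (rhoC F l n K emb C) t d /\ is_dSR F l n K emb m b C t d.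
Proof.
move=> t /andP[t1 tk].
have [L0 [H0 Hmin]] : exists L0 : lat l n K, (t <= f C L0)%N /\ forall L', (t <= f C L')%N -> (Rk l n K L0 <= Rk l n K L')%N.
  by apply: ex_min; rewrite hk.
have Heq : f C L0 = t.
  apply/eqP; rewrite eqn_leq H0 andbT leqNgt; apply/negP => Hlt.
  have HR : (0 < Rk l n K L0)%N.
    have := mxrankS (capmxSr C (VL F l n K emb m b L0)); rewrite rank_VL; lia.
  have [L' [RL' fL']] := shrink C L0 HR.
  have := Hmin L' ltac:(lia); lia.
exists (Rk l n K L0); split; split.
- by exists L0; rewrite nullityE.
- by move=> L; rewrite nullityE => HL; apply: Hmin; rewrite HL.
- by exists L0; rewrite Heq.
- exact: Hmin.
Qed.
End Proof.

Theorem mainTheorem8 (F : finFieldType) (l : nat) (n : 'I_l -> nat)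
  (K : 'I_l -> finFieldType) (emb : forall i, {rmorphism K i -> F})
  (m : 'I_l -> nat) (b : forall i, 'I_(m i) -> F)
  (hl : (0 < l)%N) (hn : forall i, (0 < n i)%N)
  (hb : forall i, is_basis F l K emb m b i)
  (C : 'M[F]_(totlen l n)) (k : nat) (hk : \rank C = k) :
  forall t : nat, (1 <= t <= k)%N ->
    exists d : nat,
      is_dS l n K (rhoC F l n K emb C) t d /\ is_dSR F l n K emb m b C t d.
Proof. exact: (@main_sec F l n K emb m b hb C k hk). Qed.
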